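(* Let $(X,d,A)$ be a metric pair such that $A$ is not isolated, and let $p\in[1,\infty]$. Then no persistence diagram in $(D(X,A),W_p)$ has a compact neighborhood. Hence $(D(X,A),W_p)$ is not locally compact, and every compact subset of $(D(X,A),W_p)$ has empty interior.
   Context: A metric on $X$ is a map $d:X\times X\to[0,\infty]$ with $d(x,x)=0$, symmetry and the triangle inequality (infinite distances allowed, $d(x,y)=0$ need not imply $x=y$); a metric pair $(X,d,A)$ is such a space with a closed subset $A$. Write $d(x,A)=\inf_{a\in A}d(x,a)$ and $A^\delta=\{x:d(x,A)<\delta\}$. $A$ is isolated if there is $\delta>0$ with $A^\delta=A$. $D(X,A)$ is the set of finite formal sums $\sum_i x_i$ of points of $X\setminus A$ (repetitions allowed), whose elements are called persistence diagrams. A matching of $\hat\alpha=\sum_{i\in I}x_i$, $\hat\beta=\sum_{j\in J}y_j$ is a formal sum $\sum_{k\in K}(x_k,y_{\varphi(k)})+\sum_{i\in I\setminus K}(x_i,z_i)+\sum_{j\in J\setminus\varphi(K)}(w_j,y_j)$ with $K\subset I$, $\varphi$ injective, $z_i,w_j\in A$; its $p$-cost is the $\ell^p$ norm (sup norm if $p=\infty$) of the distances of paired points; $W_p$ is the infimum of $p$-costs. The topology is the metric topology of $W_p$. *)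

(* Defs.v *)
From mathcomp Require Import all_boot all_order all_algebra.
From mathcomp Require Import all_classical all_reals all_analysis.
Set Implicit Arguments. Unset Strict Implicit. Unset Printing Implicit Defensive.
Import Order.TTheory GRing.Theory Num.Theory.
Local Open Scope classical_set_scope.
Local Open Scope ring_scope.

Section PD.
Variables (R : realType) (X : Type).

Definition is_metric (d : X -> X -> \bar R) : Prop :=
  [/\ forall x y, (0 <= d x y)%E,
      forall x, d x x = 0%E,
      forall x y, d x y = d y x &
      forall x y z, (d x z <= d x y + d y z)%E].

Definition dist_set (d : X -> X -> \bar R) (A : set X) (x : X) : \bar R :=
  ereal_inf [set d x a | a in A].

Definition metric_closed (d : X -> X -> \bar R) (A : set X) : Prop :=
  forall x, (forall e : R, 0 < e -> exists2 a, A a & (d x a < e%:E)%E) -> A x.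

Definition thickening (d : X -> X -> \bar R) (A : set X) (delta : R) : set X :=
  [set x | (dist_set d A x < delta%:E)%E].

Definition pd_isolated (d : X -> X -> \bar R) (A : set X) : Prop :=
  exists2 delta : R, 0 < delta & thickening d A delta = A.

(* A persistence diagram: a finite formal sum of points of X \ A
   (a finite family, repetitions allowed, indexed by 'I_n). *)
Record diagram (A : set X) := Diagram {
  dsize : nat;
  dpt : 'I_dsize -> X;
  dpt_off : forall i, ~ A (dpt i) }.
Arguments dpt {A} d _.

(* A matching of a = sum_i x_i and b = sum_j y_j: a partial injection
   phi : I -> option J (K = {i | phi i <> None}), points z_i in A for
   unmatched i, and points w_j in A for unmatched j. *)
Record matching (A : set X) (a b : diagram A) := Matching {
  mphi : 'I_(dsize a) -> option 'I_(dsize b);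
  mphi_inj : forall i i' j, mphi i = Some j -> mphi i' = Some j -> i = i';
  mz : 'I_(dsize a) -> X;
  mz_in : forall i, A (mz i);
  mw : 'I_(dsize b) -> X;
  mw_in : forall j, A (mw j) }.
Arguments mphi {A a b} m _.
Arguments mz {A a b} m _.
Arguments mw {A a b} m _.

Definition matched_dists (d : X -> X -> \bar R) (A : set X) (a b : diagram A)
    (m : matching a b) : seq (\bar R) :=
  [seq d (dpt a i) (match mphi m i with Some j => dpt b j | None => mz m i end)
     | i <- enum 'I_(dsize a)] ++
  [seq d (mw m j) (dpt b j)
     | j <- enum 'I_(dsize b) & [forall i, mphi m i != Some j]].

Definition lp_norm (p : \bar R) (l : seq (\bar R)) : \bar R :=
  match p with
  | EFin r => ((\sum_(c <- l) (c `^ r)) `^ (r^-1))%E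
  | _ => \big[maxe/0%E]_(c <- l) c
  end.

Definition pcost (d : X -> X -> \bar R) (p : \bar R) (A : set X)
    (a b : diagram A) (m : matching a b) : \bar R :=
  lp_norm p (matched_dists d m).

Definition Wp (d : X -> X -> \bar R) (p : \bar R) (A : set X)
    (a b : diagram A) : \bar R :=
  ereal_inf [set pcost d p m | m in [set: matching a b]].

Definition Wball (d : X -> X -> \bar R) (p : \bar R) (A : set X)
    (a : diagram A) (e : R) : set (diagram A) :=
  [set b | (Wp d p a b < e%:E)%E].

Definition Wopen (d : X -> X -> \bar R) (p : \bar R) (A : set X)
    (U : set (diagram A)) : Prop :=
  forall a, U a -> exists2 e : R, 0 < e & Wball d p a e `<=` U.

Definition Wnbhd (d : X -> X -> \bar R) (p : \bar R) (A : set X)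
    (a : diagram A) (N : set (diagram A)) : Prop :=
  exists2 U, Wopen d p U & U a /\ U `<=` N.

Definition Wcompact (d : X -> X -> \bar R) (p : \bar R) (A : set X)
    (K : set (diagram A)) : Prop :=
  forall (I : Type) (U : I -> set (diagram A)),
    (forall i, Wopen d p (U i)) -> K `<=` \bigcup_i U i ->
    exists2 F : set I, finite_set F & K `<=` \bigcup_(i in F) U i.

Definition Wlocally_compact (d : X -> X -> \bar R) (p : \bar R) (A : set X)
  : Prop :=
  forall a : diagram A, exists2 N, Wnbhd d p a N & Wcompact d p N.

Definition Winterior (d : X -> X -> \bar R) (p : \bar R) (A : set X)
    (K : set (diagram A)) : set (diagram A) :=
  [set a | Wnbhd d p a K].

End PD.

(* Main.v *)
Require Import Defs.
From mathcomp Require Import all_boot all_order all_algebra.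
From mathcomp Require Import all_classical all_reals all_analysis.
From mathcomp Require Import ring lra.
Set Implicit Arguments. Unset Strict Implicit. Unset Printing Implicit Defensive.
Import Order.TTheory GRing.Theory Num.Theory.
Local Open Scope classical_set_scope.
Local Open Scope ring_scope.

Section S.
Variables (R : realType) (X : Type) (d : X -> X -> \bar R) (A : set X).
Hypothesis hd : is_metric d.
Local Notation lev := (dist_set d A).
Local Notation pt b i := (@dpt _ _ b i).

Lemma d_ge0 x y : (0 <= d x y)%E.
Proof. by case: hd. Qed.
Lemma d_sym x y : d x y = d y x.
Proof. by case: hd. Qed.
Lemma d_xx x : d x x = 0%E.
Proof. by case: hd. Qed.
Lemma d_tri x y z : (d x z <= d x y + d y z)%E.
Proof. by case: hd. Qed.

Lemma lev_ge0 x : (0 <= lev x)%E.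
Proof. by apply/ereal_infP => _ [a _ <-]; apply: d_ge0. Qed.

Lemma lev_le x w : A w -> (lev x <= d x w)%E.
Proof. by move=> Aw; apply: ge_ereal_inf; exists (d x w) => //; exists w. Qed.

Lemma fin_of (x : \bar R) (b : R) : (0 <= x)%E -> (x < b%:E)%E -> x = (fine x)%:E.
Proof. by case: x. Qed.

Lemma fin_of_le (x : \bar R) (b : R) : (0 <= x)%E -> (x <= b%:E)%E -> x = (fine x)%:E.
Proof. by case: x => // /[swap]; rewrite leey_eq. Qed.

Lemma lev_tri x y : (lev x <= d x y + lev y)%E.
Proof.
have [->|hne] := eqVneq (d x y) +oo%E.
  by rewrite addye ?leey // gt_eqF // (lt_le_trans _ (lev_ge0 y)).
have [->|hly] := eqVneq (lev y) +oo%E.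
  by rewrite addey ?leey // gt_eqF // (lt_le_trans _ (d_ge0 x y)).
have hdf : d x y = (fine (d x y))%:E.
  by move: (d_ge0 x y) hne; case: (d x y).
have hlf : lev y = (fine (lev y))%:E.
  by move: (lev_ge0 y) hly; case: (lev y).
rewrite hdf hlf; apply/lee_addgt0Pr => e he.
have : (lev y < (fine (lev y) + e)%:E)%E by rewrite hlf lte_fin ltrDl.
move=> /ereal_inf_lt [_ [w Aw <-]] hw.
apply: (le_trans (lev_le x Aw)); apply: (le_trans (d_tri x y w)).
rewrite hdf; case: (d y w) hw => [z||] hz.
- by rewrite -!EFinD lee_fin -addrA lerD2l; rewrite lte_fin in hz; exact: ltW.
- by rewrite ltNge leey in hz.
- by rewrite addeNy leNye.
Qed.

Lemma count_enum_card n (P : pred 'I_n) : count P (enum 'I_n) = #|[set i | P i]%SET|.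
Proof. by rewrite cardsE cardE /enum_mem size_filter /= /enum_mem filter_predT. Qed.

Definition cnt (b : diagram A) (s : R) := #|[set i | (s%:E < lev (pt b i))%E]%SET|.

Definition term (a b : diagram A) (m : matching a b) (i : 'I_(dsize a)) :=
  d (pt a i) (match mphi m i with Some j => pt b j | None => mz m i end).

Lemma count_md (a b : diagram A) (m : matching a b) (P : pred (\bar R)) :
  count P (matched_dists d m) =
  (#|[set i | P (term m i)]%SET| +
   #|[set j | [forall i, mphi m i != Some j] && P (d (mw m j) (pt b j))]%SET|)%N.
Proof.
rewrite /matched_dists count_cat !count_map count_filter.
rewrite !count_enum_card; congr (_ + _)%N.
  by rewrite cardsE cardE /enum_mem size_filter.
by apply: eq_card => j; rewrite !inE /= andbC.
Qed.

Lemma md_ge0 (a b : diagram A) (m : matching a b) x :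
  x \in matched_dists d m -> (0 <= x)%E.
Proof.
by rewrite mem_cat => /orP [] /mapP [? _ ->]; apply: d_ge0.
Qed.

Lemma some_inj_card n1 n2 (f : 'I_n1 -> option 'I_n2) (P : {set 'I_n2}) (Q : {set 'I_n1}) :
  (forall j, j \in P -> exists2 i, i \in Q & f i = Some j) -> (#|P| <= #|Q|)%N.
Proof.
move=> H.
have -> : #|P| = #|[set Some j | j in P]%SET| by rewrite card_imset //; move=> ? ? [].
apply: leq_trans (leq_imset_card f Q); apply: subset_leq_card.

apply/fintype.subsetP => _ /imsetP [j jP ->]; have [i iQ <-] := H j jP.
by apply/imsetP; exists i.
Qed.

Lemma countT (a b : diagram A) (m : matching a b) (s1 dl : R) :
  0 <= s1 -> 0 < dl ->
  (cnt b (s1 + dl) <= cnt a s1 + count (fun x => dl%:E <= x)%E (matched_dists d m))%N.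
Proof.
move=> s10 dl0.
set P := [set j | ((s1 + dl)%:E < lev (pt b j))%E]%SET.
set Q1 := [set j | [exists i, (mphi m i == Some j) && (d (pt a i) (pt b j) < dl%:E)%E]]%SET.
rewrite /cnt -/P -(cardsID Q1 P) count_md.
apply: leq_add.
  apply: (@some_inj_card _ _ (mphi m)) => j; rewrite !inE => /andP [jP /existsP [i /andP [/eqP hi hd']]].
  exists i => //; rewrite inE; rewrite ltNge; apply/negP => hle.
  have := lev_tri (pt b j) (pt a i); rewrite d_sym.
  have hlf := fin_of_le (lev_ge0 (pt a i)) hle.
  have hdf := fin_of (d_ge0 _ _) hd'.
  rewrite hlf hdf -EFinD.
  move=> /(lt_le_trans jP); rewrite lte_fin.
  move: hd' hle; rewrite hlf hdf !lee_fin !lte_fin; lra.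
set Pa := [set j | [forall i, mphi m i != Some j] && (dl%:E <= d (mw m j) (pt b j))%E]%SET.
set Pb := [set j | [exists i, (mphi m i == Some j) && (dl%:E <= term m i)%E]]%SET.
have sub : P :\: Q1 \subset Pa :|: Pb.
  apply/fintype.subsetP => j; rewrite !inE => /andP [nQ jP].
  have [/existsP [i /eqP hi]|hn] := boolP [exists i, mphi m i == Some j].
    apply/orP; right; apply/existsP; exists i; rewrite hi eqxx /= /term hi.
    rewrite leNgt; apply/negP => hlt; move/negP: nQ; apply; apply/existsP; exists i.
    by rewrite hi eqxx.
  apply/orP; left; rewrite negb_exists in hn; rewrite hn /=.
  rewrite d_sym; apply: le_trans (lev_le _ (mw_in m j)); apply: ltW.
  by apply: le_lt_trans jP; rewrite lee_fin lerDr.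
apply: leq_trans (subset_leq_card sub) _.
apply: leq_trans (leq_card_setU _ _) _.
rewrite addnC; apply: leq_add; last by [].
apply: (@some_inj_card _ _ (mphi m)) => j; rewrite !inE => /existsP [i /andP [/eqP hi h]].
by exists i; rewrite ?inE.
Qed.
End S.

Section LP.
Variable R : realType.

Lemma lp_fin_count (r eta dl : R) (l : seq (\bar R)) : 1 <= r -> 0 < dl -> 0 < eta ->
  (forall x, x \in l -> 0 <= x)%E -> (lp_norm (r%:E) l < eta%:E)%E ->
  (count (fun x => dl%:E <= x)%E l)%:R * dl `^ r < eta `^ r.
Proof.
move=> r1 dl0 eta0 hl.
have r0 : 0 < r by lra.
have hS : (((count (fun x => dl%:E <= x)%E l)%:R * dl `^ r)%:E <= \sum_(c <- l) c `^ r)%E.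
  elim: l hl => [|x l IH] hl; first by rewrite big_nil /= mul0r.
  rewrite big_cons /= natrD mulrDl EFinD; apply: leeD; last first.
    by apply: IH => y hy; apply: hl; rewrite inE hy orbT.
  case: (boolP (dl%:E <= x)%E) => hx; last by rewrite mul0r poweR_ge0.
  rewrite mul1r -poweR_EFin; apply: gt0_ler_poweR => //; first exact: ltW.
    by rewrite in_itv /= lee_fin (ltW dl0) leey.
  by rewrite in_itv /= leey andbT; apply: hl; rewrite inE eqxx.
have hS0 : (0 <= \sum_(c <- l) c `^ r)%E by apply: sume_ge0 => ? _; apply: poweR_ge0.
rewrite /lp_norm; move: hS hS0; case: (\sum_(c <- l) c `^ r)%E => [s| |] hS hS0.
- rewrite poweR_EFin lte_fin => hs; rewrite lee_fin in hS hS0.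
  apply: (le_lt_trans hS).
  have -> : s = (s `^ r^-1) `^ r by rewrite -powRrM mulVf ?gt_eqF // powRr1.
  by apply: gt0_ltr_powR => //; rewrite ?nnegrE ?powR_ge0 ?(ltW eta0).
- by rewrite poweRyr ?invr_eq0 ?gt_eqF // ltNge leey.
- by [].
Qed.

Lemma lp_fin_upper (r u : R) (l : seq (\bar R)) : 1 <= r -> 0 <= u ->
  (forall x, x \in l -> 0 <= x <= u%:E)%E ->
  (lp_norm r%:E l <= (((size l)%:R * u `^ r) `^ r^-1)%:E)%E.
Proof.
move=> r1 u0 hl.
have r0 : 0 < r by lra.
have hS : (\sum_(c <- l) c `^ r <= ((size l)%:R * u `^ r)%:E)%E.
  elim: l hl => [|x l IH] hl; first by rewrite big_nil /= mul0r.
  rewrite big_cons /= -addn1 natrD mulrDl EFinD addeC mul1r; apply: leeD.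
    have /andP [x0 xu] := hl x (mem_head _ _).
    rewrite -poweR_EFin; apply: gt0_ler_poweR => //; first exact: ltW.
      by rewrite in_itv /= x0 leey.
    by rewrite in_itv /= lee_fin u0 leey.
  by apply: IH => y hy; apply: hl; rewrite inE hy orbT.
have hS0 : (0 <= \sum_(c <- l) c `^ r)%E by apply: sume_ge0 => ? _; apply: poweR_ge0.
rewrite /lp_norm -poweR_EFin; apply: gt0_ler_poweR => //.
- by rewrite invr_ge0 ltW.
- by rewrite in_itv /= hS0 leey.
- by rewrite in_itv /= leey lee_fin mulr_ge0 ?powR_ge0.
Qed.

Lemma lp_inf_lt (eta : R) (l : seq (\bar R)) :
  (lp_norm +oo%E l < eta%:E)%E -> forall x, x \in l -> (x < eta%:E)%E.
Proof.
elim: l => [|y l IH] //=; rewrite big_cons gt_max => /andP [hy hl] x.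
by rewrite inE => /orP [/eqP ->|]; [exact: hy | exact: IH].
Qed.

Lemma lp_inf_upper (u : R) (l : seq (\bar R)) : 0 <= u ->
  (forall x, x \in l -> x <= u%:E)%E -> (lp_norm +oo%E l <= u%:E)%E.
Proof.
move=> u0; elim: l => [|y l IH] hl /=; first by rewrite big_nil lee_fin.
rewrite big_cons ge_max hl ?mem_head //= IH // => x hx; apply: hl.
by rewrite inE hx orbT.
Qed.
End LP.

Section NC.
Variables (R : realType) (X : Type) (d : X -> X -> \bar R) (A : set X).
Hypothesis hd : is_metric d.
Local Notation lev := (dist_set d A).
Local Notation pt b i := (@dpt _ _ b i).

Lemma noncompact (p : \bar R) (N : set (diagram A)) (t : nat -> R) (k : nat -> nat)
    (c : nat -> diagram A) :
  (forall n, N (c n)) -> (forall n, 0 < t n) -> (forall n, n < k n)%N ->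
  (forall n, (k n <= #|[set i | ((t n)%:E <= lev (pt (c n) i))%E]%SET|)%N) ->
  (forall rho gam : R, 0 < rho -> 0 < gam -> exists2 eta : R, 0 < eta &
     forall n (l : seq (\bar R)), (forall x, x \in l -> 0 <= x)%E ->
     (lp_norm p l < eta%:E)%E ->
     (count (fun x => ((rho * t n)%:E <= x)%E) l)%:R <= gam * (k n)%:R) ->
  ~ Wcompact d p N.
Proof.
move=> hN ht hk hc hlp hcomp.
pose V (j : nat) : set (diagram A) := [set b | exists th sg : R,
  [/\ 0 < th, th < 1, sg < 2^-1 &
      forall n, (j <= n)%N -> (cnt d b (th * t n))%:R <= sg * (k n)%:R]].
have Vopen j : Wopen d p (V j).
  move=> b [th [sg [th0 th1 hsg hb]]].
  have hr : 0 < (1 - th) / 2 by lra.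
  have hg : 0 < (2^-1 - sg) / 2 by lra.
  have [eta eta0 heta] := hlp _ _ hr hg.
  exists eta => // b'; rewrite /Wball /Wp /= => /ereal_inf_lt [_ [m _ <-] hm].
  exists ((1 + th)/2), (sg + (2^-1 - sg) / 2); split; try lra.
  move=> n jn.
  have tn := ht n.
  have := countT hd m (s1 := th * t n) (dl := (1 - th) / 2 * t n).
  rewrite -mulrDl (_ : th + (1 - th) / 2 = (1 + th) / 2); last by field.
  move=> /(_ _ _) H; have {}H := H (mulr_ge0 (ltW th0) (ltW tn)).
  have {}H := H (mulr_gt0 hr tn).
  move: H; rewrite -(ler_nat R) natrD => H.
  apply: (le_trans H).
  have h1 := hb n jn.
  have h2 := heta n (matched_dists d m) (md_ge0 hd (m:=m)) hm.
  lra.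
have Vcov : N `<=` \bigcup_j V j.
  move=> b _; exists (4 * dsize b)%N => //; exists 2^-1, 4^-1; split; try lra.
  move=> n hn.
  have h1 : (cnt d b (2^-1 * t n) <= dsize b)%N.
    by rewrite /cnt; apply: leq_trans (max_card _) _; rewrite card_ord.
  have h2 : (4 * dsize b <= k n)%N by apply: leq_trans hn (ltnW (hk n)).
  move: h1 h2; rewrite -!(ler_nat R) natrM => h1 h2.
  lra.
have [F finF hF] := hcomp nat V Vopen Vcov.
have [s hs] := (iffLR (finite_seqP F)) finF.
set J := (\max_(i <- s) i)%N.
have [i Fi Vi] := hF _ (hN J).
have iJ : (i <= J)%N.
  by rewrite hs in Fi; apply: (@leq_bigmax_seq _ _ xpredT id i).
move: Vi => [th [sg [th0 th1 hsg hV]]].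
have := hV J iJ.
have hkc : (k J <= cnt d (c J) (th * t J))%N.
  apply: leq_trans (hc J) (subset_leq_card _).
  apply/fintype.subsetP => x; rewrite !inE; apply: lt_le_trans.
  by rewrite lte_fin gtr_pMl // ht.
move: hkc; rewrite -(ler_nat R) => hkc.
have kJ : (0 < (k J)%:R :> R) by rewrite ltr0n (leq_ltn_trans _ (hk J)).
nra.
Qed.
End NC.

Section Ext.
Variables (R : realType) (X : Type) (d : X -> X -> \bar R) (A : set X).
Hypothesis hd : is_metric d.
Local Notation lev := (dist_set d A).
Local Notation pt b i := (@dpt _ _ b i).

Definition extpt (a : diagram A) (y : X) (k : nat) (i : 'I_(dsize a + k)) : X :=
  match fintype.split i with inl i' => pt a i' | inr _ => y end.
Arguments extpt : clear implicits.

Lemma extpt_off (a : diagram A) (y : X) (k : nat) : ~ A y -> forall i, ~ A (extpt a y k i).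
Proof. by move=> hy i; rewrite /extpt; case: (fintype.split i) => [i'|_] //; exact: dpt_off. Qed.

Definition ext (a : diagram A) (y : X) (k : nat) (hy : ~ A y) : diagram A :=
  Diagram (@extpt_off a y k hy).
Arguments ext : clear implicits.

Lemma ext_high (a : diagram A) (y : X) (k : nat) (hy : ~ A y) (t : R) :
  lev y = t%:E ->
  (k <= #|[set i | (t%:E <= lev (pt (ext a y k hy) i))%E]%SET|)%N.
Proof.
move=> hly.
have hk : #|[set rshift (dsize a) j | j in 'I_k]%SET| = k.
  by rewrite card_imset ?card_ord //; exact: rshift_inj.
rewrite -{1}hk; apply: subset_leq_card; apply/fintype.subsetP => _ /imsetP [j _ ->].
rewrite inE /= /extpt.
have -> : fintype.split (rshift (dsize a) j) = inr j by exact: (unsplitK (inr j)).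
by rewrite hly.
Qed.

Lemma extm_inj (a : diagram A) (k : nat) (i i' : 'I_(dsize a))
   (j : 'I_(dsize a + k)) :
  Some (lshift k i) = Some j -> Some (lshift k i') = Some j -> i = i'.
Proof. by move=> [<-] [] h; apply: val_inj. Qed.

Definition extm (a : diagram A) (y : X) (k : nat) (hy : ~ A y) (w : X) (hw : A w) :
  matching a (ext a y k hy) :=
  @Matching _ _ a (ext a y k hy) (fun i => Some (lshift k i)) (@extm_inj a k)
    (fun _ => w) (fun _ => hw) (fun _ => w) (fun _ => hw).
Arguments extm : clear implicits.

Lemma extm_md (a : diagram A) (y : X) (k : nat) (hy : ~ A y) (w : X) (hw : A w) x :
  x \in matched_dists d (extm a y k hy w hw) -> (0 <= x <= d y w)%E.
Proof.
move=> hx; rewrite (md_ge0 hd hx) /=.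
move: hx; rewrite mem_cat => /orP [] /mapP [j].
  move=> _ -> /=; rewrite /extpt.
  have -> : fintype.split (lshift k j) = inl j by exact: (unsplitK (inl j)).
  by rewrite d_xx // d_ge0.
rewrite mem_filter => /andP [hj _] -> /=; rewrite /extpt.
case E: (fintype.split j) => [j'|j'].
  have := splitK j; rewrite E /= => hjj.
  by move/forallP: hj => /(_ j'); rewrite /= hjj eqxx.
by rewrite d_sym.
Qed.

Lemma extm_size (a : diagram A) (y : X) (k : nat) (hy : ~ A y) (w : X) (hw : A w) :
  (size (matched_dists d (extm a y k hy w hw)) <= dsize a + (dsize a + k))%N.
Proof.
rewrite /matched_dists size_cat !size_map -enumT size_enum_ord leq_add2l size_filter.
by apply: leq_trans (count_size _ _) _; rewrite size_enum_ord.
Qed.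

Lemma Wp_le_pcost (p : \bar R) (a b : diagram A) (m : matching a b) :
  (Wp d p a b <= pcost d p m)%E.
Proof. by apply: ge_ereal_inf; exists (pcost d p m) => //; exists m. Qed.

End Ext.
Arguments extpt {X A} a y k i.
Arguments ext {X A} a y k hy.
Arguments extm {X A} a y k hy w hw.

Section Final.
Variables (R : realType) (X : Type) (d : X -> X -> \bar R) (A : set X).
Hypothesis hd : is_metric d.
Hypothesis hcl : metric_closed d A.
Hypothesis hni : ~ pd_isolated d A.
Local Notation lev := (dist_set d A).
Local Notation pt b i := (@dpt _ _ b i).

Lemma small_point (dl : R) : 0 < dl ->
  exists y : X, exists t : R, [/\ ~ A y, lev y = t%:E, 0 < t & t < dl].
Proof.
move=> dl0.
have [[y [hth hy]]|H] := pselect (exists y, thickening d A dl y /\ ~ A y); last first.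
  exfalso; apply: hni; exists dl => //; apply/seteqP; split => x hx.
    by case: (pselect (A x)) => // nAx; exfalso; apply: H; exists x.
  change (lev x < dl%:E)%E; apply: le_lt_trans (lev_le d x hx) _.
  by rewrite d_xx // lte_fin.
have h0 := lev_ge0 A hd y.
have hf := fin_of h0 hth.
exists y, (fine (lev y)); split => //.
- rewrite lt_neqAle -lee_fin -hf h0 andbT; apply/negP => /eqP h.
  apply: hy; apply: hcl => e e0.
  have : (lev y < e%:E)%E by rewrite hf -h lte_fin.
  by move=> /ereal_inf_lt [_ [w Aw <-] hw]; exists w.
- by rewrite -lte_fin -hf.
Qed.

Lemma inf_case (a : diagram A) (e : R) (N : set (diagram A)) :
  0 < e -> Wball d +oo%E a e `<=` N -> ~ Wcompact d +oo%E N.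
Proof.
move=> e0 hN.
have [y [t [hy hly t0 te]]] := small_point e0.
have : (lev y < e%:E)%E by rewrite hly lte_fin.
move=> /ereal_inf_lt [_ [w Aw <-] hw].
have hwf := fin_of (d_ge0 hd y w) hw.
apply: (@noncompact R X d A hd +oo%E N (fun _ => t) (fun n => n.+1)
          (fun n => ext a y n.+1 hy)) => //.
- move=> n; apply: hN; rewrite /Wball /=.
  apply: le_lt_trans (Wp_le_pcost _ _ (extm a y n.+1 hy w Aw)) _.
  apply: le_lt_trans (_ : (_ <= (fine (d y w))%:E)%E) _; last by rewrite -hwf.
  apply: lp_inf_upper.
    by rewrite -lee_fin -hwf d_ge0.
  by move=> x hx; have /andP [_] := extm_md hd hx; rewrite hwf.
- by move=> n; apply: ext_high.
- move=> rho gam rho0 gam0; exists (rho * t); first exact: mulr_gt0.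
  move=> n l _ hl.
  rewrite (@eq_in_count _ _ pred0) ?count_pred0 ?mul0r ?mulr_ge0 ?(ltW gam0) //.
  by move=> x hx; rewrite /= leNgt (lp_inf_lt hl hx).
Qed.

Lemma fin_case (r : R) (a : diagram A) (e : R) (N : set (diagram A)) :
  1 <= r -> 0 < e -> Wball d r%:E a e `<=` N -> ~ Wcompact d r%:E N.
Proof.
move=> r1 e0 hN.
have r0 : 0 < r by lra.
set na := dsize a.
set kap := e `^ r / (2 * 2 `^ r).
have kap0 : 0 < kap by rewrite divr_gt0 ?mulr_gt0 ?powR_gt0.
have hpt n : exists q : X * X * R,
   [/\ ~ A q.1.1, lev q.1.1 = q.2%:E, 0 < q.2,
       q.2 `^ r < kap / (2 * na + n + 1)%:R & A q.1.2 /\ (d q.1.1 q.1.2 < (2 * q.2)%:E)%E].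
  set b := kap / (2 * na + n + 1)%:R.
  have b0 : 0 < b by rewrite divr_gt0 // ltr0n addn1.
  have [y [t [hy hly t0 tb]]] := small_point (powR_gt0 (r^-1) b0).
  have : (lev y < (2 * t)%:E)%E by rewrite hly lte_fin; lra.
  move=> /ereal_inf_lt [_ [w Aw <-] hw].
  exists (y, w, t); split => //=.
  have -> : b = (b `^ r^-1) `^ r by rewrite -powRrM mulVf ?gt_eqF // powRr1 // ltW.
  by apply: gt0_ltr_powR => //; rewrite nnegrE ?powR_ge0 // ltW.
have [f hf] := choice hpt.
set y := fun n => (f n).1.1.
set w := fun n => (f n).1.2.
set t := fun n => (f n).2.
have hy n : ~ A (y n) by case: (hf n).
have hly n : lev (y n) = (t n)%:E by case: (hf n).
have ht n : 0 < t n by case: (hf n).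
have htb n : t n `^ r < kap / (2 * na + n + 1)%:R by case: (hf n).
have hw n : A (w n) by case: (hf n) => _ _ _ _ [].
have hdw n : (d (y n) (w n) < (2 * t n)%:E)%E by case: (hf n) => _ _ _ _ [].
set k := fun n => (Num.Def.trunc (kap / t n `^ r)).+1.
have hT n : 0 < t n `^ r by apply: powR_gt0.
have hx n : 0 <= kap / t n `^ r by rewrite divr_ge0 // ltW.
have hk1 n : (k n)%:R <= kap / t n `^ r + 1.
  have /andP [h1 _] := truncn_itv (hx n).
  by rewrite /k -addn1 natrD lerD2r.
have hk2 n : kap / t n `^ r < (k n)%:R.
  by have /andP [_ h2] := truncn_itv (hx n).
have hkT n : kap < (k n)%:R * t n `^ r.
  by have := hk2 n; rewrite ltr_pdivrMr.
have hnT n : (2 * na + n + 1)%:R * t n `^ r < kap.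
  by have := htb n; rewrite ltr_pdivlMr ?ltr0n ?addn1 // mulrC.
apply: (@noncompact R X d A hd r%:E N t k (fun n => ext a (y n) (k n) (hy n))) => //.
- move=> n; apply: hN; rewrite /Wball /=.
  apply: le_lt_trans (Wp_le_pcost d r%:E (extm a (y n) (k n) (hy n) (w n) (hw n))) _.
  have hwf := fin_of (d_ge0 hd (y n) (w n)) (hdw n).
  set u := fine (d (y n) (w n)).
  have u0 : 0 <= u by rewrite -lee_fin -hwf d_ge0.
  have u2 : u <= 2 * t n by have := hdw n; rewrite hwf lte_fin => /ltW.
  apply: le_lt_trans (lp_fin_upper r1 u0 _) _.
    by move=> x hx0; have := extm_md hd hx0; rewrite hwf.
  rewrite lte_fin.
  set L := size _.
  have hL := extm_size d a (k n) (hy n) (hw n).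
  rewrite -/L in hL.
  have hLr : L%:R <= (2 * na)%:R + (k n)%:R :> R.
    by rewrite -natrD ler_nat mul2n -addnn -addnA.
  have hU : u `^ r <= 2 `^ r * t n `^ r.
    rewrite -powRM ?(ltW (ht n)) //; apply: ge0_ler_powR; rewrite ?nnegrE ?(ltW r0) //.
    by rewrite mulr_ge0 // ltW.
  set P := 2 `^ r.
  have P0 : 0 < P by apply: powR_gt0.
  have he : e `^ r = kap * (2 * P) by rewrite /kap divfK // mulf_neq0 // gt_eqF.
  set T := t n `^ r.
  have s2 : (k n)%:R * T <= kap + T.
    by have := ler_wpM2r (ltW (hT n)) (hk1 n); rewrite mulrDl mul1r divfK ?gt_eqF.
  have s3 : (2 * na + 1)%:R * T < kap.
    apply: le_lt_trans _ (hnT n); apply: ler_wpM2r; first exact: (ltW (hT n)).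
    by rewrite ler_nat -addnA leq_add2l leq_addl.
  have s1 : L%:R * u `^ r <= ((2 * na)%:R + (k n)%:R) * (P * T).
    by apply: ler_pM => //; rewrite ?powR_ge0.
  have hlt : L%:R * u `^ r < e `^ r.
    apply: le_lt_trans s1 _; rewrite he.
    move: s3; rewrite natrD => s3.
    have U0 : 0 < T by exact: hT.
    nra.
  have -> : e = (e `^ r) `^ r^-1 by rewrite -powRrM mulfV ?gt_eqF // powRr1 // ltW.
  apply: gt0_ltr_powR; rewrite ?invr_gt0 // nnegrE.
    by rewrite mulr_ge0 ?powR_ge0.
  by rewrite powR_ge0.
- move=> n; rewrite -(ltr_nat R); apply: le_lt_trans (hk2 n).
  rewrite ler_pdivlMr //; apply: le_trans (ltW (hnT n)); apply: ler_wpM2r.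
    exact: (ltW (hT n)).
  by rewrite ler_nat; apply: leq_trans (leq_addl (2 * na) n) (leq_addr 1 _).
- by move=> n; apply: ext_high.
- move=> rho gam rho0 gam0.
  have g0 : 0 < gam * kap by apply: mulr_gt0.
  exists (rho * (gam * kap) `^ r^-1); first by apply: mulr_gt0 => //; apply: powR_gt0.
  move=> n l hl0 hl.
  have := lp_fin_count r1 (mulr_gt0 rho0 (ht n)) (mulr_gt0 rho0 (powR_gt0 _ g0)) hl0 hl.
  rewrite (powRM r (ltW rho0) (ltW (ht n))) (powRM r (ltW rho0) (powR_ge0 _ _)) -powRrM mulVf ?gt_eqF //.
  rewrite powRr1 ?(ltW g0) //.
  have R0 : 0 < rho `^ r by apply: powR_gt0.
  set C := (count _ l)%:R.
  rewrite mulrCA ltr_pM2l // => hC.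
  have := hkT n; have := hT n; set T := t n `^ r => T0 hkt.
  have C0 : 0 <= C by [].
  rewrite -(ler_pM2r T0); apply: ltW; apply: lt_trans hC _; rewrite -mulrA ltr_pM2l //.
Qed.
End Final.

Unset Implicit Arguments.

Theorem theorem7p10 (R : realType) (X : Type) (d : X -> X -> \bar R)
    (A : set X) (p : \bar R) :
  is_metric d -> metric_closed d A -> ~ pd_isolated d A -> (1 <= p)%E ->
  [/\ forall (a : diagram A) (N : set (diagram A)),
        Wnbhd d p a N -> ~ Wcompact d p N,
      ~ Wlocally_compact d p A &
      forall K : set (diagram A), Wcompact d p K -> Winterior d p K = set0].
Proof.
move=> hd hcl hni p1.
have part1 : forall (a : diagram A) (N : set (diagram A)),
    Wnbhd d p a N -> ~ Wcompact d p N.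
  move=> a N [U hU [hUa hUN]].
  have [e e0 he] := hU a hUa.
  have hball : Wball d p a e `<=` N by move=> x /he; apply: hUN.
  clear hU he hUN; move: p1 hball; case: p => [r||] p1 hball.
  - by apply: (fin_case hd hcl hni _ e0 hball); rewrite -lee_fin.
  - exact: (inf_case hd hcl hni e0 hball).
  - by [].
split => //.
- move=> hlc.
  have [y [t [hy _ _ _]]] := small_point hd hcl hni ltr01.
  pose a0 := @Diagram X A 0 (fun _ => y) (fun _ => hy).
  have [N hN hc] := hlc a0.
  exact: part1 a0 N hN hc.
- move=> K hK; apply/seteqP; split => // a0 haK.
  exact: part1 a0 K haK hK.
Qed.
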